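(* We have $\mathcal{P}(\mathrm{Cr}_2)=\mathcal{AM}(\mathrm{Cr}_2)$, and $\mathcal{P}(\mathrm{Cr}_n)\ne\mathcal{AM}(\mathrm{Cr}_n)$ for all $n>2$.
   Context: For $n\ge2$, the $n$-crown $\mathrm{Cr}_n$ is the poset $\{x_1,\dots,x_n,y_1,\dots,y_n\}$ whose only relations between distinct elements are $x_i<y_i$ ($1\le i\le n$), $x_{i+1}<y_i$ ($1\le i\le n-1$) and $x_1<y_n$. For a finite connected poset $X$ and $x<y$, $e_{xy}$ denotes the incidence-algebra basis element, and $B=\{e_{xy}:x<y\}$. $\mathcal{C}(X)$ is the set of maximal chains. For a bijection $\theta:B\to B$ and $C:u_1<\dots<u_m$ in $\mathcal{C}(X)$, $\theta$ is increasing on $C$ if there is $D:v_1<\dots<v_m$ in $\mathcal{C}(X)$ with $\theta(e_{u_iu_j})=e_{v_iv_j}$ for all $i<j$, decreasing if $\theta(e_{u_iu_j})=e_{v_{m-j+1}v_{m-i+1}}$ for all $i<j$. $\mathcal{M}(X)$: bijections $B\to B$ increasing or decreasing on every maximal chain. A walk is a sequence $u_0,\dots,u_m$ where for each $i$ one of $u_i,u_{i+1}$ covers the other; closed if $u_0=u_m$. For a closed walk $\Gamma:u_0,\dots,u_m=u_0$ and $z\in X$: $s^+_{\theta,\Gamma}(z)=|\{i: u_i<u_{i+1},\ \exists w>z,\ \theta(e_{zw})=e_{u_iu_{i+1}}\}|$, $s^-_{\theta,\Gamma}(z)=|\{i: u_i>u_{i+1},\ \exists w>z,\ \theta(e_{zw})=e_{u_{i+1}u_i}\}|$,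 $t^+_{\theta,\Gamma}(z)=|\{i: u_i<u_{i+1},\ \exists w<z,\ \theta(e_{wz})=e_{u_iu_{i+1}}\}|$, $t^-_{\theta,\Gamma}(z)=|\{i: u_i>u_{i+1},\ \exists w<z,\ \theta(e_{wz})=e_{u_{i+1}u_i}\}|$, $0\le i\le m-1$. $\theta$ is admissible if $s^+-s^-=t^+-t^-$ at every $z$ for every closed walk; $\mathcal{AM}(X)$ is the set of admissible elements of $\mathcal{M}(X)$. $\theta:B\to B$ is proper if there is an automorphism $\lambda$ of $X$ with $\theta(e_{xy})=e_{\lambda(x)\lambda(y)}$ for all $x<y$, or an anti-automorphism $\lambda$ with $\theta(e_{xy})=e_{\lambda(y)\lambda(x)}$ for all $x<y$; $\mathcal{P}(X)$ is the set of proper bijections. *)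

(* Defs.v *)
From HB Require Import structures.
From mathcomp Require Import all_boot perm ssralg ssrint.
Set Implicit Arguments. Unset Strict Implicit. Unset Printing Implicit Defensive.

Local Open Scope ring_scope.

(* The basis element e_xy is represented by the pair (x, y) with x < y. *)
Definition Bty (T : finType) (lt : rel T) := {p : T * T | lt p.1 p.2}.
HB.instance Definition _ (T : finType) (lt : rel T) := Finite.on (@Bty T lt).

Definition is_chain (T : finType) (lt : rel T) (s : seq T) : bool :=
  pairwise lt s.

Definition maximal_chain (T : finType) (lt : rel T) (s : seq T) : Prop :=
  is_chain lt s /\
  forall s' : seq T, is_chain lt s' -> {subset s <= s'} -> {subset s' <= s}.

(* Indices are 0-based here; the default element of nth is irrelevant
   since all indices are in range. *)
Definition increasing_on (T : finType) (lt : rel T) (theta : {perm Bty lt})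
    (C : seq T) : Prop :=
  exists D : seq T, maximal_chain lt D /\ size D = size C /\
    forall (b : Bty lt) (i j : nat), (i < j < size C)%N ->
      val b = (nth (val b).1 C i, nth (val b).1 C j) ->
      val (theta b) = (nth (val b).1 D i, nth (val b).1 D j).

(* theta is decreasing on C: theta(e_{u_i u_j}) = e_{v_{m-j+1} v_{m-i+1}}
   (1-based), i.e. with 0-based indices e_{v_{m-1-j} v_{m-1-i}}. *)
Definition decreasing_on (T : finType) (lt : rel T) (theta : {perm Bty lt})
    (C : seq T) : Prop :=
  exists D : seq T, maximal_chain lt D /\ size D = size C /\
    forall (b : Bty lt) (i j : nat), (i < j < size C)%N ->
      val b = (nth (val b).1 C i, nth (val b).1 C j) ->
      val (theta b) = (nth (val b).1 D (size C - 1 - j)%N,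
                       nth (val b).1 D (size C - 1 - i)%N).

Definition in_M (T : finType) (lt : rel T) (theta : {perm Bty lt}) : Prop :=
  forall C : seq T, maximal_chain lt C ->
    increasing_on theta C \/ decreasing_on theta C.

Definition covers (T : finType) (lt : rel T) (x y : T) : bool :=
  lt x y && [forall z, ~~ (lt x z && lt z y)].

(* A closed walk u_0, u_1, ..., u_m = u_0 is given by u_0 and the list
   [u_1; ...; u_m]. *)
Definition closed_walk (T : finType) (lt : rel T) (u0 : T) (s : seq T) : bool :=
  path (fun a b => covers lt a b || covers lt b a) u0 s && (last u0 s == u0).

Definition wpt (T : finType) (u0 : T) (s : seq T) (i : nat) : T :=
  nth u0 (u0 :: s) i.

Definition s_plus (T : finType) (lt : rel T) (theta : {perm Bty lt})
    (u0 : T) (s : seq T) (z : T) : nat :=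
  #|[pred i : 'I_(size s) | lt (wpt u0 s i) (wpt u0 s i.+1) &&
      [exists b : Bty lt, ((val b).1 == z) &&
                          (val (theta b) == (wpt u0 s i, wpt u0 s i.+1))]]|.

Definition s_minus (T : finType) (lt : rel T) (theta : {perm Bty lt})
    (u0 : T) (s : seq T) (z : T) : nat :=
  #|[pred i : 'I_(size s) | lt (wpt u0 s i.+1) (wpt u0 s i) &&
      [exists b : Bty lt, ((val b).1 == z) &&
                          (val (theta b) == (wpt u0 s i.+1, wpt u0 s i))]]|.

Definition t_plus (T : finType) (lt : rel T) (theta : {perm Bty lt})
    (u0 : T) (s : seq T) (z : T) : nat :=
  #|[pred i : 'I_(size s) | lt (wpt u0 s i) (wpt u0 s i.+1) &&
      [exists b : Bty lt, ((val b).2 == z) &&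
                          (val (theta b) == (wpt u0 s i, wpt u0 s i.+1))]]|.

Definition t_minus (T : finType) (lt : rel T) (theta : {perm Bty lt})
    (u0 : T) (s : seq T) (z : T) : nat :=
  #|[pred i : 'I_(size s) | lt (wpt u0 s i.+1) (wpt u0 s i) &&
      [exists b : Bty lt, ((val b).2 == z) &&
                          (val (theta b) == (wpt u0 s i.+1, wpt u0 s i))]]|.

Definition admissible (T : finType) (lt : rel T) (theta : {perm Bty lt}) : Prop :=
  forall (u0 : T) (s : seq T), closed_walk lt u0 s -> forall z : T,
    (s_plus theta u0 s z)%:Z - (s_minus theta u0 s z)%:Z =
    (t_plus theta u0 s z)%:Z - (t_minus theta u0 s z)%:Z.

Definition in_AM (T : finType) (lt : rel T) (theta : {perm Bty lt}) : Prop :=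
  in_M theta /\ admissible theta.

Definition automorphism (T : finType) (lt : rel T) (l : {perm T}) : Prop :=
  forall x y : T, lt x y = lt (l x) (l y).

Definition anti_automorphism (T : finType) (lt : rel T) (l : {perm T}) : Prop :=
  forall x y : T, lt x y = lt (l y) (l x).

Definition proper_bij (T : finType) (lt : rel T) (theta : {perm Bty lt}) : Prop :=
  (exists l : {perm T}, automorphism lt l /\
     forall b : Bty lt, val (theta b) = (l (val b).1, l (val b).2)) \/
  (exists l : {perm T}, anti_automorphism lt l /\
     forall b : Bty lt, val (theta b) = (l (val b).2, l (val b).1)).

(* Elements: x_i = inl i, y_i = inr i, for i in 'I_n (0-based indices
   0..n-1 corresponding to 1..n). *)
Definition crown_T (n : nat) : finType := ('I_n + 'I_n)%type.

Definition crown_lt (n : nat) : rel (crown_T n) :=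
  fun a b => match a, b with
  | inl j, inr i => (val j == val i) || (val j == (val i).+1 %% n)%N
  | _, _ => false
  end.

(* Main.v *)
Require Import Defs.
From mathcomp Require Import all_boot perm ssralg ssrint zify.
Import GRing.Theory.
Set Implicit Arguments. Unset Strict Implicit. Unset Printing Implicit Defensive.

Lemma card_count n (P : nat -> bool) : #|[pred i : 'I_n | P i]| = count P (iota 0 n).
Proof.
rewrite -val_enum_ord count_map enumT cardE /enum_mem size_filter.
by apply: eq_count.
Qed.

Lemma tele (T : finType) (lt : rel T) (antis : forall a b, lt a b -> lt b a = false)
  (Q : T -> T -> bool) (f : T -> int)
  (Hf : forall a b, lt a b -> ((Q a b : nat)%:Z = f b - f a)%R) u0 s :
  path (fun a b => covers lt a b || covers lt b a) u0 s ->
  (#|[pred i : 'I_(size s) | lt (wpt u0 s i) (wpt u0 s i.+1) && Q (wpt u0 s i) (wpt u0 s i.+1)]|%:Z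
   - #|[pred i : 'I_(size s) | lt (wpt u0 s i.+1) (wpt u0 s i) && Q (wpt u0 s i.+1) (wpt u0 s i)]|%:Z
   = f (last u0 s) - f u0)%R.
Proof.
move=> /(pathP u0) Hp.
rewrite (@card_count _ (fun i => lt (wpt u0 s i) (wpt u0 s i.+1) && Q (wpt u0 s i) (wpt u0 s i.+1))).
rewrite (@card_count _ (fun i => lt (wpt u0 s i.+1) (wpt u0 s i) && Q (wpt u0 s i.+1) (wpt u0 s i))).
have -> : last u0 s = wpt u0 s (size s) by rewrite /wpt -[last u0 s]/(last u0 (u0 :: s)) -(nth_last u0 (u0 :: s)).
have : size s <= size s by [].
elim: {-2}(size s) => [|m IH] Hm.
  by rewrite /= !subrr.
rewrite -addn1 iotaD !count_cat /= !addn0 !add0n !addn1 !PoszD.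
have Hs : (lt (wpt u0 s m) (wpt u0 s m.+1)) || (lt (wpt u0 s m.+1) (wpt u0 s m)).
  have := Hp m Hm; rewrite /wpt /= /covers.
  by case/orP => /andP [-> _]; rewrite ?orbT.
have := IH (ltnW Hm).
case/orP: Hs => H.
  rewrite H (antis _ _ H) /= Hf //. move=> E. lia.
rewrite H (antis _ _ H) /=.
have := Hf _ _ H. move=> E1 E2. lia.
Qed.

Lemma Qs_eq (T : finType) (lt : rel T) (theta : {perm Bty lt}) (bb : Bty lt) z :
  [exists b : Bty lt, ((val b).1 == z) && (val (theta b) == val bb)] =
  ((val ((theta^-1)%g bb)).1 == z).
Proof.
apply/existsP/idP.
  move=> [b /andP[/eqP <- /eqP H]].
  have <- : theta b = bb by apply: val_inj.
  by rewrite permK.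
by move=> H; exists ((theta^-1)%g bb); rewrite H permKV eqxx.
Qed.

Lemma Qt_eq (T : finType) (lt : rel T) (theta : {perm Bty lt}) (bb : Bty lt) z :
  [exists b : Bty lt, ((val b).2 == z) && (val (theta b) == val bb)] =
  ((val ((theta^-1)%g bb)).2 == z).
Proof.
apply/existsP/idP.
  move=> [b /andP[/eqP <- /eqP H]].
  have <- : theta b = bb by apply: val_inj.
  by rewrite permK.
by move=> H; exists ((theta^-1)%g bb); rewrite H permKV eqxx.
Qed.

Lemma adm_pot (T : finType) (lt : rel T) (antis : forall a b, lt a b -> lt b a = false)
  (theta : {perm Bty lt}) :
  (forall z, exists f : T -> int, forall a b (H : lt a b),
      (((val ((theta^-1)%g (exist _ (a, b) H : Bty lt))).1 == z : nat)%:Z = f b - f a)%R) ->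
  (forall z, exists f : T -> int, forall a b (H : lt a b),
      (((val ((theta^-1)%g (exist _ (a, b) H : Bty lt))).2 == z : nat)%:Z = f b - f a)%R) ->
  admissible theta.
Proof.
move=> Hs Ht u0 s /andP[Hp /eqP Hl] z.
have [f Hf] := Hs z; have [g Hg] := Ht z.
rewrite /s_plus /s_minus /t_plus /t_minus.
have Hf' : forall a b, lt a b -> (([exists b0 : Bty lt, ((val b0).1 == z) && (val (theta b0) == (a, b))] : nat)%:Z = f b - f a)%R.
  by move=> a b H; rewrite -(Hf a b H) -(Qs_eq theta (exist _ (a, b) H)).
have Hg' : forall a b, lt a b -> (([exists b0 : Bty lt, ((val b0).2 == z) && (val (theta b0) == (a, b))] : nat)%:Z = g b - g a)%R.
  by move=> a b H; rewrite -(Hg a b H) -(Qt_eq theta (exist _ (a, b) H)).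
rewrite (@tele _ _ antis _ _ Hf' u0 s Hp) (@tele _ _ antis _ _ Hg' u0 s Hp).
by rewrite Hl !subrr.
Qed.

Lemma crown_antis n (a b : crown_T n) : crown_lt a b -> crown_lt b a = false.
Proof. by case: a; case: b. Qed.

Lemma crown_shape n (a b : crown_T n) : crown_lt a b ->
  exists j k, a = inl j /\ b = inr k.
Proof. by case: a => j; case: b => k //= _; exists j, k. Qed.

Lemma chain_small n (s : seq (crown_T n)) : is_chain (@crown_lt n) s -> size s <= 2.
Proof.
case: s => [|a [|b [|c s]]] //.
rewrite /is_chain /= => /andP[/andP[Hab _] /andP[/andP[Hbc _] _]].
by move: Hab Hbc; case: a; case: b; case: c.
Qed.

Lemma pair_maxchain n (a b : crown_T n) : crown_lt a b ->
  maximal_chain (@crown_lt n) [:: a; b].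
Proof.
move=> Hab; split; first by rewrite /is_chain /= Hab.
move=> s' /chain_small Hs Hsub x Hx.
have Ha := Hsub a (mem_head _ _).
have Hb : b \in s' by apply: Hsub; rewrite !inE eqxx orbT.
have Hne : a != b by move: Hab; clear; case: a => ?; case: b.
move: Hs Ha Hb Hx Hne; clear Hsub Hab; case: s' => [|p [|q [|r s']]] //=; rewrite !inE.
  by move=> _ /eqP -> /eqP ->; rewrite eqxx.
by move=> _ /orP[]/eqP -> /orP[]/eqP -> /orP[]/eqP ->; rewrite ?eqxx ?orbT.
Qed.

Lemma maxchain_pair n (s : seq (crown_T n.+1)) : maximal_chain (@crown_lt n.+1) s ->
  exists a b, s = [:: a; b] /\ crown_lt a b.
Proof.
move=> [Hc Hm].
have Hs := chain_small Hc.
have ext : forall a b : crown_T n.+1, crown_lt a b -> {subset s <= [:: a; b]} ->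
    a \in s /\ b \in s.
  move=> a b Hab Hsub; have Hch : is_chain (@crown_lt n.+1) [:: a; b] by rewrite /is_chain /= Hab.
  split; apply: (Hm [:: a; b]) => //; by rewrite !inE eqxx ?orbT.
move: Hc Hs ext; case: s {Hm} => [|a [|b [|c s]]] //.
- move=> _ _ /(_ (inl ord0) (inr ord0)).
  by rewrite /= ?eqxx => /(_ isT) /(_ (fun x H => match notF H with end)) [].
- move=> _ _; case: a => j H.
    have Hl : crown_lt (inl j : crown_T n.+1) (inr j) by rewrite /= eqxx.
    have Hs' : {subset [:: inl j] <= [:: inl j; inr j]} by move=> x; rewrite !inE => ->.
    by have [_] := H _ _ Hl Hs'; rewrite inE.
  have Hl : crown_lt (inl j : crown_T n.+1) (inr j) by rewrite /= eqxx.
  have Hs' : {subset [:: inr j] <= [:: inl j; inr j]} by move=> x; rewrite !inE => ->; rewrite orbT.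
  by have [] := H _ _ Hl Hs'; rewrite inE.
- rewrite /is_chain /= => /andP[/andP[Hab _] _] _ _.
  by exists a, b.
Qed.

Lemma all_in_M n (theta : {perm Bty (@crown_lt n.+1)}) : in_M theta.
Proof.
move=> C /maxchain_pair [a [b [-> Hab]]]; left.
pose bb : Bty (@crown_lt n.+1) := exist _ (a, b) Hab.
exists [:: (val (theta bb)).1; (val (theta bb)).2]; split.
  by apply: pair_maxchain; exact: (valP (theta bb)).
split => // b' i j /andP[Hij Hj] Hb'.
have [Hi0 Hj1] : i = 0 /\ j = 1 by move: Hij Hj; clear; case: i => [|[|i]]; case: j => [|[|[|j]]].
subst i j.
have -> : b' = bb by apply: val_inj; rewrite Hb'.
by case: (val (theta bb)).
Qed.

Definition pA n (w v : crown_T n) : int :=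
  if w is inl _ then (- ((v == w) : nat)%:Z)%R else (0%N)%:Z.
Definition pB n (w v : crown_T n) : int :=
  if w is inr _ then ((v == w) : nat)%:Z else (0%N)%:Z.

Lemma pA_ok n (w a b : crown_T n) : crown_lt a b ->
  (((a == w) : nat)%:Z = pA w b - pA w a)%R.
Proof.
case: a => j; case: b => k //= _; case: w => l /=; rewrite ?subrr //.
by rewrite opprK add0r.
Qed.

Lemma pB_ok n (w a b : crown_T n) : crown_lt a b ->
  (((b == w) : nat)%:Z = pB w b - pB w a)%R.
Proof.
case: a => j; case: b => k //= _; case: w => l /=; rewrite ?subrr ?subr0 //.
Qed.

Lemma proper_AM n (theta : {perm Bty (@crown_lt n.+1)}) : proper_bij theta -> in_AM theta.
Proof.
move=> Hp; split; first exact: all_in_M.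
apply: adm_pot; first exact: crown_antis.
- move=> z; case: Hp => [[l [_ Hl]]|[l [_ Hl]]].
  + exists (pA (l z)) => a b H.
    set c := (theta^-1)%g _.
    have E : val (theta c) = (a, b) by rewrite /c permKV.
    rewrite Hl in E; case: E => E1 E2.
    by rewrite -(pA_ok _ H) -E1 (inj_eq perm_inj).
  + exists (pB (l z)) => a b H.
    set c := (theta^-1)%g _.
    have E : val (theta c) = (a, b) by rewrite /c permKV.
    rewrite Hl in E; case: E => E1 E2.
    by rewrite -(pB_ok _ H) -E2 (inj_eq perm_inj).
- move=> z; case: Hp => [[l [_ Hl]]|[l [_ Hl]]].
  + exists (pB (l z)) => a b H.
    set c := (theta^-1)%g _.
    have E : val (theta c) = (a, b) by rewrite /c permKV.
    rewrite Hl in E; case: E => E1 E2.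
    by rewrite -(pB_ok _ H) -E2 (inj_eq perm_inj).
  + exists (pA (l z)) => a b H.
    set c := (theta^-1)%g _.
    have E : val (theta c) = (a, b) by rewrite /c permKV.
    rewrite Hl in E; case: E => E1 E2.
    by rewrite -(pA_ok _ H) -E1 (inj_eq perm_inj).
Qed.

Definition o1 m : 'I_(m.+3) := Ordinal (isT : 1 < m.+3).
Definition oL m : 'I_(m.+3) := ord_max.
Definition b00 m : Bty (@crown_lt m.+3) :=
  exist _ (inl ord0, inr ord0) (isT : crown_lt (inl ord0 : crown_T m.+3) (inr ord0)).
Definition b11 m : Bty (@crown_lt m.+3) :=
  exist _ (inl (o1 m), inr (o1 m)) (isT : crown_lt (inl (o1 m) : crown_T m.+3) (inr (o1 m))).
Definition th m : {perm Bty (@crown_lt m.+3)} := tperm (b00 m) (b11 m).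

Lemma modS_cases n k : k < n -> (k.+1 = n /\ k.+1 %% n = 0) \/ (k.+1 < n /\ k.+1 %% n = k.+1).
Proof.
move=> Hk; case: (ltngtP k.+1 n) => H.
- by right; rewrite modn_small.
- lia.
- by left; rewrite H modnn.
Qed.

Lemma eq_inl (A B : eqType) (x y : A) : (inl x == inl y :> A + B) = (x == y).
Proof. by apply/eqP/eqP => [[]|->]. Qed.
Lemma eq_inr (A B : eqType) (x y : B) : (inr x == inr y :> A + B) = (x == y).
Proof. by apply/eqP/eqP => [[]|->]. Qed.

Lemma eq_ordE n (u v : 'I_n) : (u == v) = (val u == val v).
Proof. by []. Qed.

Definition corr m (v : crown_T m.+3) : int :=
  (((v == inr ord0) : nat)%:Z + ((v == inl (o1 m)) : nat)%:Z)%R.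

Definition fS m (z v : crown_T m.+3) : int :=
  (pA z v - (((z == inl ord0) : nat)%:Z - ((z == inl (o1 m)) : nat)%:Z) * corr v)%R.

Lemma fS_ok m (a b : crown_T m.+3) (H : crown_lt a b) z :
  ((((val (((th m)^-1)%g (exist _ (a, b) H : Bty _))).1 == z) : nat)%:Z = fS z b - fS z a)%R.
Proof.
rewrite /th tpermV.
case: a H => j; case: b => k // H.
have Hjk : ((j : nat) == k) || ((j : nat) == (k : nat).+1 %% m.+3) by [].
have Hjn := ltn_ord j; have Hkn := ltn_ord k.
case: tpermP.
- move=> E. have [Ej Ek] : j = ord0 /\ k = ord0 by case: E.
  subst j k; rewrite /fS /corr /=; clear Hjk H E.
  by move: z; (case=> l; [case: (eqVneq l ord0) => [->|n0];
  [| case: (eqVneq l (o1 _)) => [->|n1]] |]);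
  rewrite /pA /= ?eq_inl ?eq_inr ?eqxx;
  try (rewrite ?(eq_sym ord0 l) ?(negbTE n0));
  try (rewrite ?(eq_sym (o1 _) l) ?(negbTE n1));
  rewrite ?eq_ordE /=; try clear n0; try clear n1; lia.
- move=> E. have [Ej Ek] : j = o1 m /\ k = o1 m by case: E.
  subst j k; rewrite /fS /corr /=; clear Hjk H E.
  by move: z; (case=> l; [case: (eqVneq l ord0) => [->|n0];
  [| case: (eqVneq l (o1 _)) => [->|n1]] |]);
  rewrite /pA /= ?eq_inl ?eq_inr ?eqxx;
  try (rewrite ?(eq_sym ord0 l) ?(negbTE n0));
  try (rewrite ?(eq_sym (o1 _) l) ?(negbTE n1));
  rewrite ?eq_ordE /=; try clear n0; try clear n1; lia.
move=> E1 E2.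
have N0 : ~~ (((j : nat) == 0) && ((k : nat) == 0)).
  apply/negP => /andP[/eqP a /eqP b]; apply: E1; apply: val_inj => /=.
  by congr (inl _, inr _); apply: val_inj; rewrite /= ?a ?b.
have N1 : ~~ (((j : nat) == 1) && ((k : nat) == 1)).
  apply/negP => /andP[/eqP a /eqP b]; apply: E2; apply: val_inj => /=.
  by congr (inl _, inr _); apply: val_inj; rewrite /= ?a ?b.
have [[M1 M2]|[M1 M2]] := modS_cases (ltn_ord k); rewrite M2 in Hjk;
rewrite /fS /corr /=; clear M2 H E1 E2;
by move: z; (case=> l; [case: (eqVneq l ord0) => [->|n0];
  [| case: (eqVneq l (o1 _)) => [->|n1]] |]);
  rewrite /pA /= ?eq_inl ?eq_inr ?eqxx;
  try (rewrite ?(eq_sym ord0 l) ?(negbTE n0));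
  try (rewrite ?(eq_sym (o1 _) l) ?(negbTE n1));
  rewrite ?eq_ordE /=; try clear n0; try clear n1; lia.
Qed.
Definition fT m (z v : crown_T m.+3) : int :=
  (pB z v - (((z == inr ord0) : nat)%:Z - ((z == inr (o1 m)) : nat)%:Z) * corr v)%R.

Lemma fT_ok m (a b : crown_T m.+3) (H : crown_lt a b) z :
  ((((val (((th m)^-1)%g (exist _ (a, b) H : Bty _))).2 == z) : nat)%:Z = fT z b - fT z a)%R.
Proof.
rewrite /th tpermV.
case: a H => j; case: b => k // H.
have Hjk : ((j : nat) == k) || ((j : nat) == (k : nat).+1 %% m.+3) by [].
have Hjn := ltn_ord j; have Hkn := ltn_ord k.
case: tpermP.
- move=> E. have [Ej Ek] : j = ord0 /\ k = ord0 by case: E.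
  subst j k; rewrite /fT /corr /=; clear Hjk H E.
  by move: z; (case=> l; [| case: (eqVneq l ord0) => [->|n0];
  [| case: (eqVneq l (o1 _)) => [->|n1]]]);
  rewrite /pB /= ?eq_inl ?eq_inr ?eqxx;
  try (rewrite ?(eq_sym ord0 l) ?(negbTE n0));
  try (rewrite ?(eq_sym (o1 _) l) ?(negbTE n1));
  rewrite ?eq_ordE /=; try clear n0; try clear n1; lia.
- move=> E. have [Ej Ek] : j = o1 m /\ k = o1 m by case: E.
  subst j k; rewrite /fT /corr /=; clear Hjk H E.
  by move: z; (case=> l; [| case: (eqVneq l ord0) => [->|n0];
  [| case: (eqVneq l (o1 _)) => [->|n1]]]);
  rewrite /pB /= ?eq_inl ?eq_inr ?eqxx;
  try (rewrite ?(eq_sym ord0 l) ?(negbTE n0));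
  try (rewrite ?(eq_sym (o1 _) l) ?(negbTE n1));
  rewrite ?eq_ordE /=; try clear n0; try clear n1; lia.
move=> E1 E2.
have N0 : ~~ (((j : nat) == 0) && ((k : nat) == 0)).
  apply/negP => /andP[/eqP a /eqP b]; apply: E1; apply: val_inj => /=.
  by congr (inl _, inr _); apply: val_inj; rewrite /= ?a ?b.
have N1 : ~~ (((j : nat) == 1) && ((k : nat) == 1)).
  apply/negP => /andP[/eqP a /eqP b]; apply: E2; apply: val_inj => /=.
  by congr (inl _, inr _); apply: val_inj; rewrite /= ?a ?b.
have [[M1 M2]|[M1 M2]] := modS_cases (ltn_ord k); rewrite M2 in Hjk;
rewrite /fT /corr /=; clear M2 H E1 E2;
by move: z; (case=> l; [| case: (eqVneq l ord0) => [->|n0];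
  [| case: (eqVneq l (o1 _)) => [->|n1]]]);
  rewrite /pB /= ?eq_inl ?eq_inr ?eqxx;
  try (rewrite ?(eq_sym ord0 l) ?(negbTE n0));
  try (rewrite ?(eq_sym (o1 _) l) ?(negbTE n1));
  rewrite ?eq_ordE /=; try clear n0; try clear n1; lia.
Qed.

Lemma th_AM m : in_AM (th m).
Proof.
split; first exact: all_in_M.
apply: adm_pot; first exact: crown_antis.
  by move=> z; exists (fS z) => a b H; exact: fS_ok.
by move=> z; exists (fT z) => a b H; exact: fT_ok.
Qed.

Lemma th_not_proper m : ~ proper_bij (th m).
Proof.
have HL : crown_lt (inl ord0 : crown_T m.+3) (inr (oL m)).
  by rewrite /crown_lt /= modnn.
pose bL : Bty (@crown_lt m.+3) := exist _ (inl ord0, inr (oL m)) HL.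
have D0 : b00 m != bL.
  apply/eqP => E.
  by have := congr1 (fun b : Bty (@crown_lt m.+3) => if (val b).2 is inr k then (k : nat) else 0) E.
have D1 : b11 m != bL.
  apply/eqP => E.
  by have := congr1 (fun b : Bty (@crown_lt m.+3) => if (val b).1 is inl k then (k : nat) else 0) E.
have T0 : th m (b00 m) = b11 m by rewrite /th tpermL.
have TL : th m bL = bL by rewrite /th tpermD.
case=> [[l [_ Hl]]|[l [_ Hl]]].
  have := Hl (b00 m); have := Hl bL; rewrite T0 TL /=.
  move=> E1 E2.
  by have := congr1 (fun v : crown_T m.+3 => if v is inl k then (k : nat) else 0)
    (etrans (congr1 fst E1) (esym (congr1 fst E2))).
have := Hl (b00 m); have := Hl bL; rewrite T0 TL /=.
move=> E1 E2.
by have := congr1 (fun v : crown_T m.+3 => if v is inr k then (k : nat) else 0)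
    (etrans (congr1 snd E1) (esym (congr1 snd E2))).
Qed.

Lemma covers_crown n (a b : crown_T n) : covers (@crown_lt n) a b = crown_lt a b.
Proof.
rewrite /covers; case H: (crown_lt a b) => //=.
apply/forallP => z; move: H; case: a => j; case: b => k //= _.
by case: z => l /=; rewrite ?andbF.
Qed.

Lemma s_plus_count (T : finType) (lt : rel T) (theta : {perm Bty lt}) u0 s z :
  s_plus theta u0 s z = count (fun i => lt (wpt u0 s i) (wpt u0 s i.+1) &&
      [exists b : Bty lt, ((val b).1 == z) && (val (theta b) == (wpt u0 s i, wpt u0 s i.+1))])
    (iota 0 (size s)).
Proof. exact: card_count. Qed.
Lemma s_minus_count (T : finType) (lt : rel T) (theta : {perm Bty lt}) u0 s z :
  s_minus theta u0 s z = count (fun i => lt (wpt u0 s i.+1) (wpt u0 s i) &&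
      [exists b : Bty lt, ((val b).1 == z) && (val (theta b) == (wpt u0 s i.+1, wpt u0 s i))])
    (iota 0 (size s)).
Proof. exact: card_count. Qed.
Lemma t_plus_count (T : finType) (lt : rel T) (theta : {perm Bty lt}) u0 s z :
  t_plus theta u0 s z = count (fun i => lt (wpt u0 s i) (wpt u0 s i.+1) &&
      [exists b : Bty lt, ((val b).2 == z) && (val (theta b) == (wpt u0 s i, wpt u0 s i.+1))])
    (iota 0 (size s)).
Proof. exact: card_count. Qed.
Lemma t_minus_count (T : finType) (lt : rel T) (theta : {perm Bty lt}) u0 s z :
  t_minus theta u0 s z = count (fun i => lt (wpt u0 s i.+1) (wpt u0 s i) &&
      [exists b : Bty lt, ((val b).2 == z) && (val (theta b) == (wpt u0 s i.+1, wpt u0 s i))])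
    (iota 0 (size s)).
Proof. exact: card_count. Qed.

Lemma eq_inl2 (A B : eqType) (x y : A) : (inl x == inl y :> A + B) = (x == y).
Proof. by apply/eqP/eqP => [[]|->]. Qed.
Lemma eq_inr2 (A B : eqType) (x y : B) : (inr x == inr y :> A + B) = (x == y).
Proof. by apply/eqP/eqP => [[]|->]. Qed.

Definition q0 : 'I_2 := ord0.
Definition q1 : 'I_2 := Ordinal (isT : 1 < 2).

Lemma I2 (j : 'I_2) : j = q0 \/ j = q1.
Proof. by case: j => [[|[|//]] H]; [left|right]; apply: val_inj. Qed.

Lemma lt2E (j k : 'I_2) : crown_lt (inl j : crown_T 2) (inr k) = true.
Proof. by case: (I2 j) => ->; case: (I2 k) => ->. Qed.

Definition dec (j k : 'I_2) : Bty (@crown_lt 2) := exist _ (inl j, inr k) (lt2E j k).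
Definition bl (b : Bty (@crown_lt 2)) : 'I_2 :=
  match (val b).1 with inl j => j | inr j => j end.
Definition br (b : Bty (@crown_lt 2)) : 'I_2 :=
  match (val b).2 with inl j => j | inr j => j end.

Lemma shape (b : Bty (@crown_lt 2)) : val b = (inl (bl b), inr (br b)).
Proof. by case: b => [[[j|j] [k|k]] H]. Qed.

Lemma core : forall a00 a01 a10 a11 c00 c01 c10 c11 : 'I_2,
  ((a00 == q0) + (a11 == q0) == (a10 == q0) + (a01 == q0)) ==>
  ((a00 == q1) + (a11 == q1) == (a10 == q1) + (a01 == q1)) ==>
  ((c00 == q0) + (c11 == q0) == (c10 == q0) + (c01 == q0)) ==>
  ((c00 == q1) + (c11 == q1) == (c10 == q1) + (c01 == q1)) ==>
  ((a00, c00) != (a01, c01)) ==> ((a00, c00) != (a10, c10)) ==>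
  ((a00, c00) != (a11, c11)) ==> ((a01, c01) != (a10, c10)) ==>
  ((a01, c01) != (a11, c11)) ==> ((a10, c10) != (a11, c11)) ==>
  ([&& a01 == a00, a11 == a10, c10 == c00 & c11 == c01] ||
   [&& a10 == a00, a11 == a01, c01 == c00 & c11 == c10]).
Proof.
by do 8!case=> [[|[|//]] ?].
Qed.

Lemma proper_inv_auto n (theta : {perm Bty (@crown_lt n)}) (l : {perm crown_T n}) :
  automorphism (@crown_lt n) l ->
  (forall b, val ((theta^-1)%g b) = (l (val b).1, l (val b).2)) -> proper_bij theta.
Proof.
move=> Ha Hl; left; exists (l^-1)%g; split.
  by move=> x y; rewrite (Ha ((l^-1)%g x)) !permKV.
move=> b; have := Hl (theta b); rewrite permK => ->.
by rewrite /= !permK; case: (val (theta b)).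
Qed.

Lemma proper_inv_anti n (theta : {perm Bty (@crown_lt n)}) (l : {perm crown_T n}) :
  anti_automorphism (@crown_lt n) l ->
  (forall b, val ((theta^-1)%g b) = (l (val b).2, l (val b).1)) -> proper_bij theta.
Proof.
move=> Ha Hl; right; exists (l^-1)%g; split.
  by move=> x y; rewrite (Ha ((l^-1)%g y)) !permKV.
move=> b; have := Hl (theta b); rewrite permK => ->.
by rewrite /= !permK; case: (val (theta b)).
Qed.

Lemma lt2_side (x y : crown_T 2) :
  crown_lt x y = (match x, y with inl _, inr _ => true | _, _ => false end).
Proof. by case: x => j; case: y => k //; rewrite lt2E. Qed.

Lemma AM2_proper (theta : {perm Bty (@crown_lt 2)}) : in_AM theta -> proper_bij theta.
Proof.
move=> [_ Hadm].
set h := (theta^-1)%g.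
pose p j k := bl (h (dec j k)); pose q j k := br (h (dec j k)).
have QsD : forall j k z, [exists b : Bty (@crown_lt 2), ((val b).1 == z) && (val (theta b) == (inl j, inr k))] = (inl (p j k) == z).
  by move=> j k z; rewrite -[(inl j, inr k)]/(val (dec j k)) Qs_eq shape.
have QtD : forall j k z, [exists b : Bty (@crown_lt 2), ((val b).2 == z) && (val (theta b) == (inl j, inr k))] = (inr (q j k) == z).
  by move=> j k z; rewrite -[(inl j, inr k)]/(val (dec j k)) Qt_eq shape.
have cw : closed_walk (@crown_lt 2) (inl q0) [:: inr q0; inl q1; inr q1; inl q0].
  by rewrite /closed_walk /= !covers_crown !lt2E.
have Ex := Hadm _ _ cw.
have Ep : forall m, ((p q0 q0 == m) + (p q1 q1 == m) == (p q1 q0 == m) + (p q0 q1 == m))%N.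
  move=> m; have := Ex (inl m).
  rewrite s_plus_count s_minus_count t_plus_count t_minus_count /wpt /=.
  rewrite !QsD !QtD /= !eq_inl2.
  move: (p q0 q0 == m) (p q1 q1 == m) (p q1 q0 == m) (p q0 q1 == m) => a b c d E.
  apply/eqP; lia.
have Eq : forall m, ((q q0 q0 == m) + (q q1 q1 == m) == (q q1 q0 == m) + (q q0 q1 == m))%N.
  move=> m; have := Ex (inr m).
  rewrite s_plus_count s_minus_count t_plus_count t_minus_count /wpt /=.
  rewrite !QsD !QtD /= !eq_inr2.
  move: (q q0 q0 == m) (q q1 q1 == m) (q q1 q0 == m) (q q0 q1 == m) => a b c d E.
  apply/eqP; lia.
have hinj : forall j k j' k', (p j k == p j' k') && (q j k == q j' k') -> (j == j') && (k == k').
  move=> j k j' k' /andP[/eqP E1 /eqP E2].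
  have : h (dec j k) = h (dec j' k').
    by apply: val_inj; rewrite !shape; congr (inl _, inr _).
  by move/perm_inj => /(congr1 val) /= [-> ->]; rewrite !eqxx.
have NE : forall j k j' k', ~~ ((j == j') && (k == k')) -> (p j k, q j k) != (p j' k', q j' k').
  by move=> j k j' k' H; rewrite xpair_eqE; apply: contra H; exact: hinj.
have := core (p q0 q0) (p q0 q1) (p q1 q0) (p q1 q1) (q q0 q0) (q q0 q1) (q q1 q0) (q q1 q1).
rewrite (Ep q0) (Ep q1) (Eq q0) (Eq q1) (NE q0 q0 q0 q1) // (NE q0 q0 q1 q0) //.
rewrite (NE q0 q0 q1 q1) // (NE q0 q1 q1 q0) // (NE q0 q1 q1 q1) // (NE q1 q0 q1 q1) //=.
case/orP => /and4P [/eqP A1 /eqP A2 /eqP A3 /eqP A4].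
- have Fp : forall j k, p j k = p j q0.
    by move=> j k; case: (I2 j) => ->; case: (I2 k) => ->; rewrite ?A1 ?A2.
  have Fq : forall j k, q j k = q q0 k.
    by move=> j k; case: (I2 j) => ->; case: (I2 k) => ->; rewrite ?A3 ?A4.
  pose lf (v : crown_T 2) : crown_T 2 :=
    match v with inl j => inl (p j q0) | inr k => inr (q q0 k) end.
  have lf_inj : injective lf.
    case=> j1; case=> j2 /= E; try discriminate E; case: E => E; congr (_ _).
      have : (p j1 q0 == p j2 q0) && (q j1 q0 == q j2 q0).
        by rewrite E (Fq j1 q0) (Fq j2 q0) !eqxx.
      by move/hinj => /andP[/eqP ->].
    have : (p q0 j1 == p q0 j2) && (q q0 j1 == q q0 j2).
      by rewrite E (Fp q0 j1) (Fp q0 j2) !eqxx.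
    by move/hinj => /andP[_ /eqP ->].
  apply: (@proper_inv_auto _ theta (perm lf_inj)).
    by move=> x y; rewrite !permE lt2_side [in RHS]lt2_side; case: x; case: y.
  move=> b; have -> : b = dec (bl b) (br b) by apply: val_inj; rewrite shape.
  rewrite shape !(permE lf_inj) /=; congr (inl _, inr _); [exact: Fp | exact: Fq].
- have Fp : forall j k, p j k = p q0 k.
    by move=> j k; case: (I2 j) => ->; case: (I2 k) => ->; rewrite ?A1 ?A2.
  have Fq : forall j k, q j k = q j q0.
    by move=> j k; case: (I2 j) => ->; case: (I2 k) => ->; rewrite ?A3 ?A4.
  pose lf (v : crown_T 2) : crown_T 2 :=
    match v with inl j => inr (q j q0) | inr k => inl (p q0 k) end.
  have lf_inj : injective lf.
    case=> j1; case=> j2 /= E; try discriminate E; case: E => E; congr (_ _).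
      have : (p j1 q0 == p j2 q0) && (q j1 q0 == q j2 q0).
        by rewrite E (Fp j1 q0) (Fp j2 q0) !eqxx.
      by move/hinj => /andP[/eqP ->].
    have : (p q0 j1 == p q0 j2) && (q q0 j1 == q q0 j2).
      by rewrite E (Fq q0 j1) (Fq q0 j2) !eqxx.
    by move/hinj => /andP[_ /eqP ->].
  apply: (@proper_inv_anti _ theta (perm lf_inj)).
    by move=> x y; rewrite !permE lt2_side [in RHS]lt2_side; case: x; case: y.
  move=> b; have -> : b = dec (bl b) (br b) by apply: val_inj; rewrite shape.
  rewrite shape !(permE lf_inj) /=; congr (inl _, inr _); [exact: Fp | exact: Fq].
Qed.

Theorem corollary4p12 :
  (forall theta : {perm Bty (@crown_lt 2)},
      proper_bij theta <-> in_AM theta) /\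
  (forall n : nat, (2 < n)%N ->
      ~ (forall theta : {perm Bty (@crown_lt n)},
            proper_bij theta <-> in_AM theta)).
Proof.
split.
  by move=> theta; split; [exact: proper_AM | exact: AM2_proper].
move=> n Hn H.
have [m Em] : exists m, n = m.+3 by exists (n - 3); lia.
subst n.
have [_ /(_ (th_AM m))] := H (th m).
exact: th_not_proper.
Qed.
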